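(* Let $X$ take values in a finite set $\mathcal X$ with $\mathbb{P}(X=x)>0$ for all $x$, let $Y\in[M]$ ($M\ge 2$), $R\in\{0,1\}$, and let $F$ take values in a finite set $\mathcal F$. Assume $F$ is conditionally independent of $R$ given $(Y,X)$, $\mathbb{P}(R=1\mid Y=y,X=x)>0$ for all $x,y$, $\mathbb{P}(R=1,Y=y\mid X=x)>0$ for all $x,y$, and $\mathbb{P}(R=0\mid X=x)>0$ for all $x$. With $\alpha_x(f,y)=\mathbb{P}(R=1,F=f,Y=y\mid X=x)$, $\beta_x(f)=\mathbb{P}(R=0,F=f\mid X=x)$, $A_x=[\alpha_x(f,y)]_{f,y}=[\mathbf a_{x,1},\dots,\mathbf a_{x,M}]$ (columns $\mathbf a_{x,y}\in\mathbb{R}^{|\mathcal F|}$), $\boldsymbol\beta_x=(\beta_x(f))_f$, and $D=\mathrm{diag}(1,\dots,M)$, define \[\theta^{\mathrm{shad}}_{\max}=\sum_{x}\mathbb{P}(X=x)\max\{\mathbf 1^\top A_xD(\mathbf w+\mathbf 1):A_x\mathbf w=\boldsymbol\beta_x,\ \mathbf w\ge\mathbf 0\},\quad \theta^{\mathrm{shad}}_{\min}=\sum_{x}\mathbb{P}(X=x)\min\{\mathbf 1^\top A_xD(\mathbf w+\mathbf 1):A_x\mathbf w=\boldsymbol\beta_x,\ \mathbf w\ge\mathbf 0\},\] and $\theta_{\max}=\mathbb{E}[Y\mathbf 1\{R=1\}]+M\,\mathbb{P}(R=0)$, $\theta_{\min}=\mathbb{E}[Y\mathbf 1\{R=1\}]+\mathbb{P}(R=0)$.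 Then \[\theta_{\max}-\theta^{\mathrm{shad}}_{\max}\ \ge\ \sum_{x\in\mathcal X}\frac{\mathbf 1^\top\boldsymbol\beta_x}{2}\Big\|\frac{\boldsymbol\beta_x}{\mathbf 1^\top\boldsymbol\beta_x}-\frac{\mathbf a_{x,M}}{\mathbf 1^\top\mathbf a_{x,M}}\Big\|_1\mathbb{P}(X=x)\ \ge 0,\] \[\theta^{\mathrm{shad}}_{\min}-\theta_{\min}\ \ge\ \sum_{x\in\mathcal X}\frac{\mathbf 1^\top\boldsymbol\beta_x}{2}\Big\|\frac{\boldsymbol\beta_x}{\mathbf 1^\top\boldsymbol\beta_x}-\frac{\mathbf a_{x,1}}{\mathbf 1^\top\mathbf a_{x,1}}\Big\|_1\mathbb{P}(X=x)\ \ge 0.\]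
   Context: $[\theta_{\min},\theta_{\max}]$ is the identification interval for $\mathbb{E}[Y]$ under outcome-dependent missingness without using $F$; $[\theta^{\mathrm{shad}}_{\min},\theta^{\mathrm{shad}}_{\max}]$ is the identification interval when the auxiliary prediction $F$ (satisfying $F\perp R\mid Y,X$) is also observed. Note $\mathbf 1^\top\boldsymbol\beta_x=\mathbb{P}(R=0\mid X=x)$ and $\mathbf 1^\top\mathbf a_{x,y}=\mathbb{P}(R=1,Y=y\mid X=x)$. *)

(* Defs.v *)
From mathcomp Require Import all_boot all_order all_algebra.
From mathcomp Require Import classical_sets reals.
Set Implicit Arguments. Unset Strict Implicit. Unset Printing Implicit Defensive.
Import Order.TTheory GRing.Theory Num.Theory.
Local Open Scope ring_scope.
Local Open Scope classical_set_scope.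

(* Joint pmf p x y r f = P(X=x, Y=y, R=r, F=f).  Y ranges over 'I_M, where the
   ordinal y stands for the label (val y).+1 in [M] = {1,...,M}. R = true means R=1. *)
Section Defs.
Variables (R : realType) (Xt Ft : finType) (M : nat).
Variable p : Xt -> 'I_M -> bool -> Ft -> R.

Definition is_pmf := (forall x y r f, 0 <= p x y r f) /\
  \sum_x \sum_y \sum_r \sum_f p x y r f = 1.

Definition pX x := \sum_y \sum_r \sum_f p x y r f.
Definition pXY x y := \sum_r \sum_f p x y r f.
Definition pXYR x y r := \sum_f p x y r f.
Definition pXYF x y f := \sum_r p x y r f.
Definition pXR x r := \sum_y \sum_f p x y r f.

Definition cond_indep_F_R :=
  forall x y r f, p x y r f * pXY x y = pXYR x y r * pXYF x y f.

Definition alpha x f y := p x y true f / pX x.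
Definition beta x f := (\sum_y p x y false f) / pX x.

Definition label (y : 'I_M) : R := (val y).+1%:R.

Definition feasible x (w : 'I_M -> R) :=
  (forall y, 0 <= w y) /\ (forall f, \sum_y alpha x f y * w y = beta x f).

Definition shad_obj x (w : 'I_M -> R) :=
  \sum_f \sum_y alpha x f y * label y * (w y + 1).

Definition shad_values x := [set v | exists w, feasible x w /\ v = shad_obj x w].

Definition theta_shad_max := \sum_x pX x * sup (shad_values x).
Definition theta_shad_min := \sum_x pX x * inf (shad_values x).

Definition EY_R1 := \sum_x \sum_y \sum_f label y * p x y true f.
Definition PR0 := \sum_x pXR x false.

Definition theta_max := EY_R1 + M%:R * PR0.
Definition theta_min := EY_R1 + PR0.

Definition tv_term x y :=
  (\sum_f beta x f) / 2 *
  \sum_f `| beta x f / (\sum_g beta x g) - alpha x f y / (\sum_g alpha x g y) |.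
End Defs.

Definition ord_first (M : nat) (h : (1 < M)%N) : 'I_M := Ordinal (ltnW h).
Definition ord_last (M : nat) (h : (1 < M)%N) : 'I_M.
Proof. refine (@Ordinal M M.-1 _). by rewrite ltn_predL; exact: ltnW h. Defined.

(* Main.v *)
Require Import Defs.
From mathcomp Require Import all_boot all_order all_algebra.
From mathcomp Require Import classical_sets reals.
From mathcomp Require Import ring lra zify.
Import Order.TTheory GRing.Theory Num.Theory.
Local Open Scope ring_scope.

Lemma core (R : realFieldType) (Ft I : finType) (al : Ft -> I -> R) (be : Ft -> R)
  (w : I -> R) (y0 : I) :
  (forall f y, 0 <= al f y) -> (forall y, 0 <= w y) ->
  (forall f, be f = \sum_y al f y * w y) ->
  0 < \sum_f al f y0 -> 0 < \sum_f be f ->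
  (\sum_f be f) * \sum_f `| be f / (\sum_g be g) - al f y0 / (\sum_g al g y0) |
   <= 2 * \sum_(y | y != y0) (\sum_f al f y) * w y.
Proof.
move=> hal hw hbe ha hb.
set a := fun y => \sum_f al f y.
rewrite -/(a y0).
set b := \sum_f be f.
have hbE : b = \sum_y a y * w y.
  rewrite /b (eq_bigr _ (fun f _ => hbe f)) exchange_big /=.
  by apply: eq_bigr => y _; rewrite mulr_suml.
have ha0 : a y0 != 0 by rewrite gt_eqF.
have hb0 : b != 0 by rewrite gt_eqF.
rewrite [X in X <= _]mulr_sumr.
have step : forall f, b * `|be f / b - al f y0 / a y0| <=
   \sum_(y | y != y0) (al f y * w y + a y * w y * (al f y0 / a y0)).
  move=> f.
  rewrite -[X in X * _]ger0_norm; last exact: ltW.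
  rewrite -normrM mulrBr.
  have -> : b * (be f / b) = be f by field.
  have -> : be f - b * (al f y0 / a y0) =
     \sum_(y | y != y0) (al f y * w y - a y * w y * (al f y0 / a y0)).
    rewrite hbe hbE mulr_suml -sumrB (bigD1 y0) //=.
    have -> : al f y0 * w y0 - a y0 * w y0 * (al f y0 / a y0) = 0 by field.
    by rewrite add0r.
  apply: le_trans; first exact: ler_norm_sum.
  apply: ler_sum => y _.
  apply: le_trans; first exact: ler_normD.
  rewrite normrN !ger0_norm //.
    by apply: mulr_ge0 => //; [apply: mulr_ge0 => //; apply: sumr_ge0|
      apply: divr_ge0 => //; apply: ltW].
  exact: mulr_ge0.
apply: le_trans (ler_sum _ (fun f _ => step f)) _.
rewrite exchange_big /= mulr_sumr.
apply: ler_sum => y _.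
rewrite big_split /= -mulr_suml -mulr_sumr -mulr_suml -/(a y).
have -> : a y * w y * (a y0 / a y0) = a y * w y by rewrite divff // mulr1.
lra.
Qed.

Lemma tv_le {R : realType} {Xt Ft : finType} {M : nat}
  {p : Xt -> 'I_M -> bool -> Ft -> R} {x w y0} :
  (forall x y r f, 0 <= p x y r f) -> 0 < pX p x ->
  0 < \sum_f alpha p x f y0 -> 0 < \sum_f beta p x f ->
  feasible p x w ->
  tv_term p x y0 <= \sum_(y | y != y0) (\sum_f alpha p x f y) * w y.
Proof.
move=> hp0 hP ha hb [hw hf].
have h := @core R Ft _ (alpha p x) (beta p x) w y0
  (fun f y => divr_ge0 (hp0 _ _ _ _) (ltW hP)) hw (fun f => esym (hf f)) ha hb.
move: h; rewrite /tv_term.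
set S := \sum_f `|_|.
set B := \sum_f beta p x f.
move=> h.
have -> : B / 2 * S = (B * S) / 2 by ring.
lra.
Qed.

Lemma obj_eq {R : realType} {Xt Ft : finType} {M : nat}
  (p : Xt -> 'I_M -> bool -> Ft -> R) x w :
  shad_obj p x w = \sum_f \sum_y alpha p x f y * label R y +
    \sum_y label R y * ((\sum_f alpha p x f y) * w y).
Proof.
rewrite /shad_obj exchange_big [X in _ = X + _]exchange_big /= -big_split.
apply: eq_bigr => y _ /=.
rewrite mulr_suml mulr_sumr -big_split; apply: eq_bigr => f _ /=; ring.
Qed.

Lemma B_eq {R : realType} {Xt Ft : finType} {M : nat}
  {p : Xt -> 'I_M -> bool -> Ft -> R} {x w} :
  feasible p x w ->
  \sum_f beta p x f = \sum_y (\sum_f alpha p x f y) * w y.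
Proof.
move=> [_ hf].
rewrite (eq_bigr _ (fun f _ => esym (hf f))) exchange_big /=.
by apply: eq_bigr => y _; rewrite mulr_suml.
Qed.

Lemma label_last (R : realType) {M : nat} {hM : (1 < M)%N} {y : 'I_M} :
  y != ord_last hM -> 1 <= M%:R - label R y.
Proof.
case: y => m hm hne.
have hne' : m <> M.-1 by move=> e; move: hne; apply/negP/negPn/eqP; apply: val_inj.
have h2 : (m.+2 <= M)%N by lia.
rewrite /label /=.
have : (m.+2)%:R <= M%:R :> R by rewrite ler_nat.
rewrite -!natr1. lra.
Qed.

Lemma label_first (R : realType) {M : nat} {hM : (1 < M)%N} {y : 'I_M} :
  y != ord_first hM -> 1 <= label R y - 1.
Proof.
case: y => m hm hne.
have hne' : m <> 0%N by move=> e; move: hne; apply/negP/negPn/eqP; apply: val_inj.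
have h2 : (1 <= m)%N by lia.
rewrite /label /=.
have : 1%:R <= m%:R :> R by rewrite ler_nat.
rewrite -!natr1. lra.
Qed.

Lemma obj_ub {R : realType} {Xt Ft : finType} {M : nat} (hM : (1 < M)%N)
  (p : Xt -> 'I_M -> bool -> Ft -> R) x w :
  (forall x y r f, 0 <= p x y r f) -> 0 < pX p x ->
  0 < \sum_f alpha p x f (ord_last hM) -> 0 < \sum_f beta p x f ->
  feasible p x w ->
  shad_obj p x w <= \sum_f \sum_y alpha p x f y * label R y +
     M%:R * \sum_f beta p x f - tv_term p x (ord_last hM).
Proof.
move=> hp0 hP ha hb fw.
have htv := tv_le hp0 hP ha hb fw.
have hal : forall f y, 0 <= alpha p x f y := fun f y => divr_ge0 (hp0 _ _ _ _) (ltW hP).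
rewrite obj_eq (B_eq fw).
suff : \sum_(y | y != ord_last hM) (\sum_f alpha p x f y) * w y <=
  M%:R * \sum_y (\sum_f alpha p x f y) * w y -
    \sum_y label R y * ((\sum_f alpha p x f y) * w y) by lra.
have -> : M%:R * \sum_y (\sum_f alpha p x f y) * w y -
    \sum_y label R y * ((\sum_f alpha p x f y) * w y) =
  \sum_y (M%:R - label R y) * ((\sum_f alpha p x f y) * w y).
  by rewrite mulr_sumr -sumrB; apply: eq_bigr => y _; ring.
rewrite [X in _ <= X](bigD1 (ord_last hM)) //=.
have h0 : 0 <= (M%:R - label R (ord_last hM)) *
   ((\sum_f alpha p x f (ord_last hM)) * w (ord_last hM)).
  rewrite /label /= prednK; last exact: ltnW.
  by rewrite subrr mul0r.
suff : \sum_(y | y != ord_last hM) (\sum_f alpha p x f y) * w y <=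
  \sum_(y | y != ord_last hM) (M%:R - label R y) * ((\sum_f alpha p x f y) * w y) by lra.
apply: ler_sum => y hy.
have := label_last R hy.
have : 0 <= (\sum_f alpha p x f y) * w y by apply: mulr_ge0; [apply: sumr_ge0 | case: fw].
nra.
Qed.

Lemma obj_lb {R : realType} {Xt Ft : finType} {M : nat} (hM : (1 < M)%N)
  (p : Xt -> 'I_M -> bool -> Ft -> R) x w :
  (forall x y r f, 0 <= p x y r f) -> 0 < pX p x ->
  0 < \sum_f alpha p x f (ord_first hM) -> 0 < \sum_f beta p x f ->
  feasible p x w ->
  \sum_f \sum_y alpha p x f y * label R y +
     \sum_f beta p x f + tv_term p x (ord_first hM) <= shad_obj p x w.
Proof.
move=> hp0 hP ha hb fw.
have htv := tv_le hp0 hP ha hb fw.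
have hal : forall f y, 0 <= alpha p x f y := fun f y => divr_ge0 (hp0 _ _ _ _) (ltW hP).
rewrite obj_eq (B_eq fw).
suff : \sum_(y | y != ord_first hM) (\sum_f alpha p x f y) * w y <=
  \sum_y label R y * ((\sum_f alpha p x f y) * w y) -
   \sum_y (\sum_f alpha p x f y) * w y by lra.
have -> : \sum_y label R y * ((\sum_f alpha p x f y) * w y) -
   \sum_y (\sum_f alpha p x f y) * w y =
  \sum_y (label R y - 1) * ((\sum_f alpha p x f y) * w y).
  by rewrite -sumrB; apply: eq_bigr => y _; ring.
rewrite [X in _ <= X](bigD1 (ord_first hM)) //=.
have h0 : 0 <= (label R (ord_first hM) - 1) *
   ((\sum_f alpha p x f (ord_first hM)) * w (ord_first hM)).
  by rewrite /label /= subrr mul0r.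
suff : \sum_(y | y != ord_first hM) (\sum_f alpha p x f y) * w y <=
  \sum_(y | y != ord_first hM) (label R y - 1) * ((\sum_f alpha p x f y) * w y) by lra.
apply: ler_sum => y hy.
have := label_first R hy.
have : 0 <= (\sum_f alpha p x f y) * w y by apply: mulr_ge0; [apply: sumr_ge0 | case: fw].
nra.
Qed.

Lemma witness {R : realType} {Xt Ft : finType} {M : nat}
  (p : Xt -> 'I_M -> bool -> Ft -> R) x :
  (forall x y r f, 0 <= p x y r f) -> 0 < pX p x -> cond_indep_F_R p ->
  (forall y, 0 < pXYR p x y true / pX p x) ->
  feasible p x (fun y => pXYR p x y false / pXYR p x y true).
Proof.
move=> hp0 hP hci hxr.
have hP0 : pX p x != 0 by rewrite gt_eqF.
have hR1 : forall y, 0 < pXYR p x y true.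
  move=> y; rewrite lt_def; apply/andP; split; last exact: sumr_ge0.
  by apply/negP => /eqP e; move: (hxr y); rewrite e mul0r ltxx.
split.
  by move=> y; apply: divr_ge0; [apply: sumr_ge0 | apply: ltW].
move=> f; rewrite /beta mulr_suml; apply: eq_bigr => y _.
have hR10 : pXYR p x y true != 0 by rewrite gt_eqF.
have hXY : 0 < pXY p x y.
  have -> : pXY p x y = pXYR p x y true + pXYR p x y false by rewrite /pXY big_bool.
  have : 0 <= pXYR p x y false by apply: sumr_ge0.
  have := hR1 y; lra.
have e1 := hci x y true f.
have e0 := hci x y false f.
have E : p x y true f * pXYR p x y false = p x y false f * pXYR p x y true.
  apply/eqP; rewrite -subr_eq0.
  have : (p x y true f * pXYR p x y false - p x y false f * pXYR p x y true) * pXY p x y = 0.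
    rewrite mulrBl -!mulrA [pXYR p x y false * _]mulrC [pXYR p x y true * _]mulrC !mulrA e0 e1.
    ring.
  by move/eqP; rewrite mulf_eq0 (gt_eqF hXY) orbF.
rewrite /alpha.
have -> : p x y true f / pX p x * (pXYR p x y false / pXYR p x y true) =
  (p x y true f * pXYR p x y false) / (pX p x * pXYR p x y true) by field; apply/andP.
rewrite E; field; apply/andP; done.
Qed.

Theorem theorem1 (R : realType) (Xt Ft : finType) (M : nat) (hM : (1 < M)%N)
  (p : Xt -> 'I_M -> bool -> Ft -> R) :
  is_pmf p ->
  (forall x, 0 < pX p x) ->
  cond_indep_F_R p ->
  (forall x y, 0 < pXYR p x y true / pXY p x y) ->
  (forall x y, 0 < pXYR p x y true / pX p x) ->
  (forall x, 0 < pXR p x false / pX p x) ->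
  (theta_max p - theta_shad_max p >=
     \sum_x tv_term p x (ord_last hM) * pX p x /\
   \sum_x tv_term p x (ord_last hM) * pX p x >= 0) /\
  (theta_shad_min p - theta_min p >=
     \sum_x tv_term p x (ord_first hM) * pX p x /\
   \sum_x tv_term p x (ord_first hM) * pX p x >= 0).
Proof.
move=> [hp0 _] hP hci _ hxr hr0.
have hP0 : forall x, pX p x != 0 by move=> x; rewrite gt_eqF.
have ha : forall x y, 0 < \sum_f alpha p x f y.
  by move=> x y; rewrite /alpha -mulr_suml; exact: hxr.
have hb : forall x, 0 < \sum_f beta p x f.
  by move=> x; rewrite /beta -mulr_suml exchange_big; exact: hr0.
have ne : forall x, (shad_values p x !=set0)%classic.
  move=> x; exists (shad_obj p x (fun y => pXYR p x y false / pXYR p x y true)).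
  by exists (fun y => pXYR p x y false / pXYR p x y true); split => //;
    apply: witness => //; exact: hxr.
set C := fun x => \sum_f \sum_y alpha p x f y * label R y.
set B := fun x => \sum_f beta p x f.
have hEY : EY_R1 p = \sum_x pX p x * C x.
  rewrite /EY_R1; apply: eq_bigr => x _; rewrite /C mulr_sumr.
  under [RHS]eq_bigr => f _ do rewrite mulr_sumr.
  rewrite [RHS]exchange_big /=; apply: eq_bigr => y _; apply: eq_bigr => f _.
  rewrite /alpha; field; exact: hP0.
have hPR : PR0 p = \sum_x pX p x * B x.
  rewrite /PR0; apply: eq_bigr => x _.
  rewrite /B /beta -mulr_suml /pXR exchange_big /=; field; exact: hP0.
have htv0 : forall y0, 0 <= \sum_x tv_term p x y0 * pX p x.
  move=> y0; apply: sumr_ge0 => x _; apply: mulr_ge0; last exact: ltW.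
  rewrite /tv_term; apply: mulr_ge0; first by have := hb x; lra.
  by apply: sumr_ge0 => f _; exact: normr_ge0.
split; (split; last exact: htv0).
- rewrite /theta_max /theta_shad_max hEY hPR mulr_sumr -big_split -sumrB.
  apply: ler_sum => x _ /=.
  have hs : sup (shad_values p x) <= C x + M%:R * B x - tv_term p x (ord_last hM).
    apply: ge_sup; first exact: ne.
    by move=> v [w [fw ->]]; apply: obj_ub.
  have := ler_wpM2l (ltW (hP x)) hs.
  have := hP x; nra.
- rewrite /theta_min /theta_shad_min hEY hPR -big_split -sumrB.
  apply: ler_sum => x _ /=.
  have hs : C x + B x + tv_term p x (ord_first hM) <= inf (shad_values p x).
    apply: lb_le_inf; first exact: ne.
    by move=> v [w [fw ->]]; apply: obj_lb.
  have := ler_wpM2l (ltW (hP x)) hs.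
  have := hP x; nra.
Qed.
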